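(* For $k\in\mathbb Z\setminus\{0\}$: (i) if $\alpha\in(0,1)$, then $(2-2^{\alpha-1})^{-1}<c^-(k)+c^+(k)\le1$; (ii) if $\alpha\in(1,2)$, then $1\le c^-(k)+c^+(k)\le(2-2^{\alpha-1})^{-1}$.
   Context: $B_\alpha$ is fractional Brownian motion with $\mathrm{Cov}(B_\alpha(t),B_\alpha(s))=\frac{|t|^\alpha+|s|^\alpha-|t-s|^\alpha}{2}$, $\alpha\in(0,2)$; $Z_\alpha(t)=\sqrt2B_\alpha(t)-|t|^\alpha$. Let $\Sigma=\begin{pmatrix}2&2-2^\alpha\\2-2^\alpha&2\end{pmatrix}$ be the covariance matrix of $(Z_\alpha(-1),Z_\alpha(1))$. For $k\in\mathbb Z$, define $(c^-(k),c^+(k))^\top=\Sigma^{-1}\big(\mathrm{Cov}(Z_\alpha(k),Z_\alpha(-1)),\mathrm{Cov}(Z_\alpha(k),Z_\alpha(1))\big)^\top$. (Equivalently, $c^-(k)+c^+(k)=\frac{2+2|k|^\alpha-(|k|-1)^\alpha-(|k|+1)^\alpha}{4-2^\alpha}$ for $k\ne0$.) *)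

(* Defs.v *)
From HB Require Import structures.
From mathcomp Require Import all_boot all_order all_algebra.
From mathcomp Require Import all_classical all_reals all_analysis.
Set Implicit Arguments. Unset Strict Implicit. Unset Printing Implicit Defensive.
Import Order.TTheory GRing.Theory Num.Theory.
Local Open Scope ring_scope.

Section FBM.
Variable R : realType.

(* Cov(Z_a(t), Z_a(s)) where Z_a(t) = sqrt 2 B_a(t) - |t|^a:
   = 2 Cov(B_a(t),B_a(s)) = |t|^a + |s|^a - |t-s|^a  (powR: 0 `^ a = 0 for a <> 0). *)
Definition covZ (a t s : R) : R := `|t| `^ a + `|s| `^ a - `|t - s| `^ a.

Definition ptime (i : 'I_2) : R := if i == ord0 then -1 else 1.

Definition Sigma (a : R) : 'M[R]_2 := \matrix_(i, j) covZ a (ptime i) (ptime j).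

Definition covvec (a : R) (k : int) : 'cV[R]_2 := \col_i covZ a k%:~R (ptime i).

Definition cvec (a : R) (k : int) : 'cV[R]_2 := invmx (Sigma a) *m covvec a k.

Definition cminus (a : R) (k : int) : R := cvec a k ord0 ord0.
Definition cplus (a : R) (k : int) : R := cvec a k (lift ord0 ord0) ord0.

End FBM.

(* Main.v *)
Require Import Defs.
From HB Require Import structures.
From mathcomp Require Import all_boot all_order all_algebra.
From mathcomp Require Import all_classical all_reals all_analysis.
From mathcomp Require Import ring lra.
Import Order.TTheory GRing.Theory Num.Theory.
Import numFieldNormedType.Exports.
Local Open Scope ring_scope.

Section S.
Variable R : realType.
Local Open Scope classical_set_scope.

Lemma is_derive_pshift (c k y : R) : 0 < y + k ->
  is_derive y 1 (fun y => (y + k) `^ c) (c * (y + k) `^ (c - 1)).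
Proof.
move=> h.
have := @is_derive1_comp _ (fun x : R => x `^ c) (shift k) y (c * (y + k) `^ (c - 1)) 1.
rewrite mulr1; apply.
  by apply: is_derive1_powR.
exact: is_derive_shift.
Qed.

Lemma powR_ltr_exp (b x y : R) : 1 < b -> x < y -> b `^ x < b `^ y.
Proof.
move=> b1 xy; rewrite /powR gt_eqF ?(lt_trans _ b1) // ltr_expR.
by rewrite ltr_pM2r // ln_gt0.
Qed.

Lemma sum_formula (a : R) (k : int) : 0 < a < 2 ->
  cminus a k + cplus a k =
  (2 + 2 * `|k%:~R : R| `^ a - `|k%:~R + 1 : R| `^ a - `|k%:~R - 1 : R| `^ a)
   / (4 - 2 `^ a).
Proof.
case/andP=> a0 a2.
have q2 : 2 `^ a < 4.
  have -> : (4 : R) = 2 `^ 2 by rewrite (@powR_mulrn R 2 2) // expr2; lra.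
  by rewrite powR_ltr_exp // ltr1n.
set q := 2 `^ a.
have Sg : Sigma a = \matrix_(i, j) (if i == j then 2 else 2 - q).
  apply/matrixP => i j; rewrite !mxE /covZ /ptime.
  case: i => [[|[|//]] ?]; case: j => [[|[|//]] ?] /=;
  rewrite ?normrN ?normr1 ?powR1 ?subrr ?normr0 ?powR0 ?gt_eqF //.
  - by rewrite subr0.
  - by rewrite -opprD normrN ger0_norm.
  - by rewrite opprK ger0_norm.
  - by rewrite subr0.
have q0 : 0 < q by rewrite powR_gt0.
have d0 : (4 - (2 - q) ^+ 2) != 0.
  apply/lt0r_neq0; have -> : 4 - (2 - q) ^+ 2 = q * (4 - q) by ring.
  by rewrite mulr_gt0 // subr_gt0.
have [uS _] : Sigma a \in unitmx /\ ((4 - (2 - q) ^+ 2)^-1 *: \matrix_(i, j) (if i == j then 2 else q - 2) : 'M[R]_2) \in unitmx.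
  apply: mulmx1_unit; rewrite Sg; apply/matrixP => i j.
  rewrite !mxE !big_ord_recl !big_ord0 !mxE.
  case: i => [[|[|//]] ?]; case: j => [[|[|//]] ?] /=; field => //.
have E := mulKVmx uS (covvec a k).
rewrite /cminus /cplus /cvec.
move: (invmx (Sigma a) *m covvec a k) E => c E.
have E0 := congr1 (fun M : 'M[R]_(2,1) => M ord0 ord0) E.
have E1 := congr1 (fun M : 'M[R]_(2,1) => M (lift ord0 ord0) ord0) E.
move: E0 E1; rewrite Sg /= !mxE !big_ord_recl !big_ord0 !mxE /=.
rewrite /covZ /ptime /= normrN normr1 powR1 opprK.
move=> E0 E1.
have D0 : 4 - q != 0 by rewrite subr_eq0 gt_eqF.
apply: (mulIf D0); rewrite divfK //.
set x := c ord0 ord0 in E0 E1 *; set y := c (lift ord0 ord0) ord0 in E0 E1 *.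
have -> : (x+y)*(4-q) = (2*x + ((2-q)*y+0)) + ((2-q)*x + (2*y+0)) by ring.
rewrite E0 E1; ring.
Qed.

Lemma is_deriveB' (f g : R -> R) (x df dg : R) : is_derive x 1 f df -> is_derive x 1 g dg ->
  is_derive x 1 (fun y => f y - g y) (df - dg).
Proof. move=> h1 h2; exact: is_deriveB. Qed.

Lemma is_deriveD' (f g : R -> R) (x df dg : R) : is_derive x 1 f df -> is_derive x 1 g dg ->
  is_derive x 1 (fun y => f y + g y) (df + dg).
Proof. move=> h1 h2; exact: is_deriveD. Qed.

Lemma is_derive_nshift (c k y : R) : 0 < k - y ->
  is_derive y 1 (fun y => (k - y) `^ c) (- (c * (k - y) `^ (c - 1))).
Proof.
move=> h.
have := @is_derive1_comp _ (fun x : R => x `^ c) (fun y => k - y) y (c * (k - y) `^ (c - 1)) (-1).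
rewrite mulrN1; apply; first by apply: is_derive1_powR.
have -> : -1 = (0 : R) - 1 by rewrite sub0r.
by apply: is_deriveB'.
Qed.

Lemma pow_diff_sign (e u v : R) : 0 < u -> u < v -> e != 0 ->
  0 < e * (v `^ e - u `^ e).
Proof.
move=> u0 uv e0.
have u0' : u \in Num.nneg by rewrite nnegrE ltW.
have v0' : v \in Num.nneg by rewrite nnegrE ltW // (lt_trans u0).
case: (ltgtP e 0) e0 => // ep _.
- rewrite nmulr_rgt0 // subr_lt0.
  rewrite -[e]opprK (powRN v) (powRN u) ltf_pV2 ?posrE ?powR_gt0 //; last exact: (lt_trans u0).
  by apply: gt0_ltr_powR => //; rewrite oppr_gt0.
- by rewrite pmulr_rgt0 // subr_gt0; apply: gt0_ltr_powR.
Qed.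

Lemma mid_ineq (c m : R) : 1 < m -> c * (c - 1) != 0 ->
  0 < c * (c - 1) * ((m + 1) `^ c + (m - 1) `^ c - 2 * m `^ c).
Proof.
move=> m1 cc.
have c0 : c != 0 by apply: contraNneq cc => ->; rewrite mul0r.
have c1 : c - 1 != 0 by apply: contraNneq cc => ->; rewrite mulr0.
pose f t := (t + m) `^ c + (m - t) `^ c.
pose df t := c * (t + m) `^ (c - 1) + - (c * (m - t) `^ (c - 1)).
have fd : forall t : R, t \in `[0, 1]%R -> is_derive t 1 f (df t).
  move=> t; rewrite in_itv /= => /andP[t0 t1].
  apply: is_deriveD'; first by apply: is_derive_pshift; lra.
  by apply: is_derive_nshift; lra.
have fc : {within `[0, 1], continuous f}.
  apply: derivable_within_continuous => t ht; by have [] := fd t ht.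
have [xi] := @MVT R f df 0 1 ltr01 (fun t ht => fd t (subset_itv_oo_cc ht)) fc.
  rewrite in_itv /= => /andP[x0 x1].
  rewrite /f /df !add0r !subr0 mulr1 => E.
  have -> : (m + 1) `^ c + (m - 1) `^ c - 2 * m `^ c = c * ((xi + m) `^ (c - 1) - (m - xi) `^ (c - 1)).
    rewrite mulrBr -E [m + 1]addrC; ring.
  have Hu : 0 < m - xi by lra.
  have Hv : m - xi < xi + m by lra.
  have P := @pow_diff_sign (c - 1) (m - xi) (xi + m) Hu Hv c1.
  rewrite (_ : _ * _ = c ^+ 2 * ((c - 1) * ((xi + m) `^ (c - 1) - (m - xi) `^ (c - 1)))); last by ring.
  by rewrite mulr_gt0 // exprn_even_gt0.
Qed.
Lemma shift_right : (fun y : R => y - 1) @ 1^'+ --> 0^'+.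
Proof.
move=> P /=; rewrite !near_simpl !near_withinE.
move=> [e /= e0 H]; exists e => //= y Hy y1; apply: H; last by rewrite subr_gt0.
by move: Hy; rewrite /ball_ /= sub0r normrN distrC.
Qed.

Lemma h_ineq (a m : R) : 0 < a -> 1 < m -> (a - 1) * (a - 2) != 0 ->
  0 < (a - 1) * (a - 2) * ((2 - 2 `^ a) - (2 * m `^ a - (m + 1) `^ a - (m - 1) `^ a)).
Proof.
move=> a0 m1 aa.
pose g y := y `^ a + y `^ a - (y + 1) `^ a.
pose f y := g y - (y - 1) `^ a.
pose dg y := a * y `^ (a - 1) + a * y `^ (a - 1) - a * (y + 1) `^ (a - 1).
pose df y := dg y - a * (y - 1) `^ (a - 1).
have gd : forall y : R, 0 < y -> is_derive y 1 g (dg y).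
  move=> y y0; apply: is_deriveB'; last by apply: is_derive_pshift; lra.
  by apply: is_deriveD'; apply: is_derive1_powR.
have fd : forall y : R, 1 < y -> is_derive y 1 f (df y).
  move=> y y1; apply: is_deriveB'; first by apply: gd; lra.
  by apply: is_derive_pshift; lra.
have cont : forall y : R, 1 < y -> {for y, continuous f}.
  move=> y y1; apply: differentiable_continuous; apply/derivable1_diffP.
  by have [] := fd y y1.
have gc1 : {for 1, continuous g}.
  apply: differentiable_continuous; apply/derivable1_diffP.
  by have [] := gd 1 ltr01.
have fc : {within `[1, m], continuous f}.
  apply/continuous_within_itvP => //; split.
  - move=> y; rewrite in_itv /= => /andP[y1 _]; exact: cont.
  - rewrite /f; apply: cvgB; first by apply: cvg_at_right_filter; exact: gc1.
    rewrite subrr powR0 ?gt_eqF //.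
    exact: (cvg_comp _ _ shift_right (powR_cvg0 a0)).
  - by apply: cvg_at_left_filter; exact: cont.
have fd' : forall y : R, y \in `]1, m[%R -> is_derive y 1 f (df y).
  by move=> y; rewrite in_itv /= => /andP[y1 _]; exact: fd.
have [xi] := MVT m1 fd' fc.
rewrite in_itv /= => /andP[x1 xm] E.
have cc : (a - 1) * (a - 1 - 1) != 0 by rewrite -addrA (_ : -1 + -1 = -2 :> R) //; lra.
have M := @mid_ineq (a - 1) xi x1 cc.
have -> : (2 - 2 `^ a) - (2 * m `^ a - (m + 1) `^ a - (m - 1) `^ a) = f 1 - f m.
  rewrite /f /g powR1 subrr powR0 ?gt_eqF //; ring.
have E' : f 1 - f m = - (df xi * (m - 1)).
  by rewrite -E; ring.
rewrite E' /df /dg.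
set K := (a - 1) * (a - 1 - 1) * _ in M.
rewrite (_ : _ * _ = (a * (m - 1)) * K); last by rewrite /K; ring.
by rewrite mulr_gt0 // mulr_gt0 // subr_gt0.
Qed.


Lemma main (a : R) (k : int) (hk : k != 0) :
  (0 < a < 1 ->
     (2 - 2 `^ (a - 1))^-1 < cminus a k + cplus a k /\ cminus a k + cplus a k <= 1) /\
  (1 < a < 2 ->
     1 <= cminus a k + cplus a k /\ cminus a k + cplus a k <= (2 - 2 `^ (a - 1))^-1).
Proof.
set r : R := k%:~R.
set x := `|r|.
have xn : x = (`|k|%N)%:R by rewrite natr_absz intr_norm.
have x1 : x = 1 \/ 1 < x.
  rewrite xn; have := absz_gt0 k; rewrite hk.
  case: (`|k|%N) => [|[|n]] //= _; [by left | right].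
  by rewrite ltr1n.
have x1' : 1 <= x by case: x1 => [->|/ltW].
have Psym : `|r + 1| `^ a + `|r - 1| `^ a = (x + 1) `^ a + (x - 1) `^ a.
  have [r0|r0] := leP 0 r.
    have rx : x = r by rewrite /x ger0_norm.
    rewrite -rx !ger0_norm //; lra.
  have rx : r = - x by rewrite /x ltr0_norm // opprK.
  have -> : r + 1 = - (x - 1) by rewrite rx; ring.
  have -> : r - 1 = - (x + 1) by rewrite rx; ring.
  rewrite !normrN !ger0_norm; [ring | lra | lra].
have SF : 0 < a < 2 -> cminus a k + cplus a k =
  (2 + 2 * x `^ a - ((x + 1) `^ a + (x - 1) `^ a)) / (4 - 2 `^ a).
  move=> ha; rewrite sum_formula // -/r -/x -Psym; ring.
set q := 2 `^ a.
have hb : 0 < a -> 2 `^ (a - 1) = q / 2.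
  move=> a0; rewrite powRB; last by rewrite pnatr_eq0 implybT.
  by rewrite (@powRr1 R 2).
have q4 : a < 2 -> q < 4.
  move=> a2; have -> : (4 : R) = 2 `^ 2 by rewrite (@powR_mulrn R 2 2) // expr2; lra.
  by rewrite powR_ltr_exp // ltr1n.
have q2 : 0 < a -> (2 - 2 `^ (a - 1))^-1 = 2 * (4 - q)^-1.
  move=> a0; rewrite hb //.
  have -> : 2 - q / 2 = (4 - q) / 2 by field.
  by rewrite invf_div mulrC.
set X := x `^ a; set P := (x + 1) `^ a + (x - 1) `^ a.
have E1 : 0 < a -> x = 1 -> X = 1 /\ P = q.
  move=> a0 ex; rewrite /X /P ex powR1 subrr addrC powR0; last by rewrite gt_eqF.
  by rewrite add0r.
split => /andP[a0 a1].
- have a2 : a < 2 by lra.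
  have D0 : 0 < 4 - q by rewrite subr_gt0 q4.
  rewrite SF ?a0 // q2 // ltr_pM2r ?invr_gt0 // ler_pdivrMr // mul1r.
  have [Hmid Hh] : P < 2 * X /\ 2 * X - P <= 2 - q.
    case: x1 => [/(E1 a0) [-> ->]|x1].
      split; last by lra.
      rewrite mulr1 (_ : 2 = 2 `^ 1); last by rewrite powRr1.
      by rewrite /q powR_ltr_exp // ltr1n.
    have M := @mid_ineq a x x1.
    have H := @h_ineq a x a0 x1.
    rewrite -/X -/P -/q in M H.
    have K1 : a * (a - 1) < 0 by nra.
    have K2 : 0 < (a - 1) * (a - 2) by nra.
    move: (M (ltr0_neq0 K1)) (H (lt0r_neq0 K2)).
    rewrite nmulr_rgt0 // pmulr_rgt0 // => M' H'.
    move: M' H'; rewrite /P /X => M' H'; split; lra.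
  rewrite -/X -/P -/q; split; lra.
- have a0' : 0 < a by lra.
  have D0 : 0 < 4 - q by rewrite subr_gt0 q4.
  rewrite SF ?a0' // q2 // ler_pM2r ?invr_gt0 // ler_pdivlMr // mul1r.
  have [Hmid Hh] : 2 * X <= P /\ 2 - q <= 2 * X - P.
    case: x1 => [/(E1 a0') [-> ->]|x1].
      split; last by lra.
      rewrite mulr1 -{1}(@powRr1 R 2) //.
      by apply: ler_powR; [rewrite ler1n | lra].
    have M := @mid_ineq a x x1.
    have H := @h_ineq a x a0' x1.
    rewrite -/X -/P -/q in M H.
    have K1 : 0 < a * (a - 1) by nra.
    have K2 : (a - 1) * (a - 2) < 0 by nra.
    move: (M (lt0r_neq0 K1)) (H (ltr0_neq0 K2)).
    rewrite (pmulr_rgt0 _ K1) (nmulr_rgt0 _ K2) => M' H'.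
    move: M' H'; rewrite /P /X => M' H'; split; lra.
  rewrite -/X -/P -/q; split; lra.
Qed.
End S.

Theorem lemma3p7 (R : realType) (a : R) (k : int) (hk : k != 0) :
  (0 < a < 1 ->
     (2 - 2 `^ (a - 1))^-1 < cminus a k + cplus a k /\ cminus a k + cplus a k <= 1) /\
  (1 < a < 2 ->
     1 <= cminus a k + cplus a k /\ cminus a k + cplus a k <= (2 - 2 `^ (a - 1))^-1).
Proof. exact: main. Qed.
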